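(* Let $G_1$ and $G_2$ be two vertex-disjoint finite connected simple graphs, each having at least one edge. Then $\mathcal{NC}(G_1\sqcup G_2)\simeq\Sigma\big(\mathcal{NC}(G_1)\ast\mathcal{NC}(G_2)\big)$ (homotopy equivalence of geometric realizations), where $\Sigma$ denotes suspension.
   Context: For a finite simple graph $G$, a set $S\subseteq V(G)$ is a cover of $G$ if $V(G)\setminus S$ is an independent set (contains no edge of $G$). The non-cover complex $\mathcal{NC}(G)$ is the simplicial complex whose simplices are the subsets $S\subseteq V(G)$ that are not covers, i.e. such that $V(G)\setminus S$ contains both endpoints of some edge of $G$. The join $K_1\ast K_2$ of complexes on disjoint vertex sets has simplices $\sigma\sqcup\tau$, $\sigma\in K_1,\tau\in K_2$. $G_1\sqcup G_2$ is the disjoint union of graphs. *)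

(* Defs.v *)
From mathcomp Require Import all_boot all_order all_algebra.
From mathcomp Require Import all_classical all_reals all_analysis.
From mathcomp Require Import Rstruct Rstruct_topology.
Import numFieldNormedType.Exports.
Import Order.TTheory GRing.Theory Num.Theory.

Set Implicit Arguments.
Unset Strict Implicit.
Unset Printing Implicit Defensive.

Local Open Scope classical_set_scope.
Local Open Scope ring_scope.

Definition simple_graph (V : finType) (e : rel V) : Prop :=
  symmetric e /\ irreflexive e.

Definition graph_connected (V : finType) (e : rel V) : Prop :=
  forall x y : V, connect e x y.

Definition has_edge (V : finType) (e : rel V) : Prop :=
  exists x y : V, e x y.

Definition disjoint_union (V1 V2 : finType) (e1 : rel V1) (e2 : rel V2)
  : rel (V1 + V2)%type :=
  fun a b => match a, b with
             | inl x, inl y => e1 x y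
             | inr x, inr y => e2 x y
             | _, _ => false
             end.

Definition complex (V : finType) := pred {set V}.

Definition is_cover (V : finType) (e : rel V) (S : {set V}) : bool :=
  [forall x, forall y, ((x \notin S) && (y \notin S)) ==> ~~ e x y].

Definition non_cover_complex (V : finType) (e : rel V) : complex V :=
  fun S => ~~ is_cover e S.

Definition cjoin (V1 V2 : finType) (K1 : complex V1) (K2 : complex V2)
  : complex (V1 + V2)%type :=
  fun S => K1 [set x | inl x \in S]%SET && K2 [set y | inr y \in S]%SET.

(* The 0-sphere S^0 as a complex on two vertices: simplices are the empty set
   and the two singletons. *)
Definition sphere0 : complex bool := fun S => (#|S| <= 1)%N.

Definition csusp (V : finType) (K : complex V) : complex (V + bool)%type :=
  cjoin K sphere0.

(** * Geometric realization, as a subspace of R^V (product = Euclidean topology) *)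
Definition RV (V : finType) := {ptws V -> Rdefinitions.R}.

Definition realization (V : finType) (K : complex V) : set (RV V) :=
  [set x : RV V | (forall v, 0 <= x v) /\ (\sum_(v : V) x v = 1)
                  /\ K [set v | x v != 0]%SET].

Definition cmap (T U : topologicalType) (A : set T) (B : set U) (f : T -> U) : Prop :=
  {within A, continuous f} /\ f @` A `<=` B.

Definition homotopic (T U : topologicalType) (A : set T) (B : set U)
  (f g : T -> U) : Prop :=
  exists H : (Rdefinitions.R * T)%type -> U,
    cmap ((`[0%R, 1%R]%classic : set Rdefinitions.R) `*` A) B H /\
    (forall x, A x -> H (0, x) = f x /\ H (1, x) = g x).

Definition homotopy_equivalent (T U : topologicalType) (A : set T) (B : set U)
  : Prop :=
  exists (f : T -> U) (g : U -> T),
    cmap A B f /\ cmap B A g /\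
    homotopic A A (g \o f) id /\ homotopic B B (f \o g) id.

(* Main.v *)
Require Import Defs.
From mathcomp Require Import all_boot all_order all_algebra.
From mathcomp Require Import all_classical all_reals all_analysis.
From mathcomp Require Import Rstruct Rstruct_topology.
Import numFieldNormedType.Exports.
Import Order.TTheory GRing.Theory Num.Theory.
Set Implicit Arguments.
Unset Strict Implicit.
Unset Printing Implicit Defensive.
Local Open Scope classical_set_scope.
Local Open Scope ring_scope.

Module Helpers.
Notation RR := Rdefinitions.R.

Section DD.
Variables (V : finType) (e : rel V) (u0 v0 : V).
Hypothesis e0 : e u0 v0.

Definition term (x : V -> RR) (p : V * V) : RR := Order.max (x p.1) (x p.2).
Definition dd (x : V -> RR) : RR :=
  \big[Order.min/term x (u0, v0)]_(p | e p.1 p.2) term x p.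

Lemma dd_le x u v : e u v -> dd x <= term x (u, v).
Proof.
move=> euv; rewrite /dd (bigD1 (u, v)) //=.
by rewrite ge_min lexx.
Qed.

Lemma dd_ge x c : (forall p, e p.1 p.2 -> c <= term x p) -> c <= dd x.
Proof.
move=> H; rewrite /dd; elim/big_ind: _ => //.
- by apply: H.
- by move=> a b ca cb; rewrite le_min ca cb.
Qed.

Lemma dd_att x : exists p, e p.1 p.2 /\ dd x = term x p.
Proof.
rewrite /dd; elim/big_ind: _.
- by exists (u0, v0).
- move=> a b [p [ep ->]] [q [eq ->]].
  case: (leP (term x p) (term x q)) => h.
  + by exists p; split => //; rewrite min_l.
  + by exists q; split => //; rewrite min_r // ltW.
- by move=> p ep; exists p.
Qed.

Lemma dd_ge0 x : (forall v, 0 <= x v) -> 0 <= dd x.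
Proof.
move=> x0; apply: dd_ge => p _; rewrite /term le_max x0 //.
Qed.

Lemma dd0P x : (forall v, 0 <= x v) ->
  dd x = 0 <-> exists u v, [/\ e u v, x u = 0 & x v = 0].
Proof.
move=> x0; split.
- case: (dd_att x) => [[u v] [/= euv ->]] h; exists u, v; split => //.
  + by apply/eqP; rewrite eq_le x0 andbT -h /term le_max lexx.
  + by apply/eqP; rewrite eq_le x0 andbT -h /term le_max lexx orbT.
- move=> [u [v [euv xu xv]]]; apply/eqP; rewrite eq_le dd_ge0 // andbT.
  by have := dd_le x euv; rewrite /term /= xu xv maxxx.
Qed.

Lemma dd_red x : exists u v, [/\ e u v, Order.max (x u - dd x) 0 = 0
   & Order.max (x v - dd x) 0 = 0].
Proof.
case: (dd_att x) => [[u v] [/= euv h]]; exists u, v; split => //.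
- by apply/max_r; rewrite subr_le0 h /term le_max lexx.
- by apply/max_r; rewrite subr_le0 h /term le_max lexx orbT.
Qed.

Lemma dd_shift x c : (forall v, 0 <= x v) -> dd x = 0 -> 0 <= c ->
  dd (fun v => x v + c) = c.
Proof.
move=> x0 d0 c0; apply/eqP; rewrite eq_le; apply/andP; split.
- have [u [v [euv xu xv]]] := (dd0P x0).1 d0.
  by have := dd_le (fun v => x v + c) euv; rewrite /term /= xu xv add0r maxxx.
- apply: dd_ge => p _; rewrite /term le_max; apply/orP; left.
  by rewrite lerDr.
Qed.

Definition ddr (r : seq (V * V)) (x : RV V) : RR :=
  \big[Order.min/term x (u0, v0)]_(p <- r | e p.1 p.2) term x p.

Lemma dd_cont : continuous (fun x : RV V => dd x).
Proof.
have tc : forall p, continuous (fun x : RV V => term x p).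
  move=> p x; apply: continuous_max; exact: proj_continuous.
suff : forall r, continuous (ddr r) by apply.
elim => [|p r IH].
  have -> : ddr [::] = fun x => term x (u0, v0).
    by apply/funext => y; rewrite /ddr big_nil.
  exact: tc.
have -> : ddr (p :: r) = fun x => if e p.1 p.2 then Order.min (term x p) (ddr r x)
   else ddr r x.
  by apply/funext => y; rewrite /ddr big_cons.
case: (e p.1 p.2) => // x.
have := (@continuous_min RR (RV V) (fun x : RV V => term x p) (ddr r) x (tc p x) (IH x)).
exact.
Qed.

End DD.

Section Cont.
Lemma ptws_cont (T : topologicalType) (W : finType) (h : T -> RV W) :
  (forall w, continuous (fun x => h x w)) -> continuous h.
Proof. by move=> H x; apply/(@pointwise_cvgP (discrete_topology W) RR) => w; exact: H. Qed.

Lemma contD (T : topologicalType) (f g : T -> RR) :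
  continuous f -> continuous g -> continuous (fun x => f x + g x).
Proof. move=> cf cg x; have := @cvgD _ (RR^o) T _ _ f g _ _ (cf x) (cg x). exact. Qed.
Lemma contM (T : topologicalType) (f g : T -> RR) :
  continuous f -> continuous g -> continuous (fun x => f x * g x).
Proof. move=> cf cg x; have := @cvgM (RR^o) T _ _ f g _ _ (cf x) (cg x). exact. Qed.
Lemma contN (T : topologicalType) (f : T -> RR) :
  continuous f -> continuous (fun x => - f x).
Proof. move=> cf x; have := @cvgN _ (RR^o) T _ _ f _ (cf x). exact. Qed.
Lemma contC (T : topologicalType) (c : RR) : continuous (fun _ : T => c).
Proof. exact: cst_continuous. Qed.
Lemma contMax (T : topologicalType) (f g : T -> RR) :
  continuous f -> continuous g -> continuous (fun x => Order.max (f x) (g x)).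
Proof. by move=> cf cg x; have := @continuous_max RR T f g x (cf x) (cg x). Qed.
Lemma contMin (T : topologicalType) (f g : T -> RR) :
  continuous f -> continuous g -> continuous (fun x => Order.min (f x) (g x)).
Proof. by move=> cf cg x; have := @continuous_min RR T f g x (cf x) (cg x). Qed.

Lemma sum_cont (T : topologicalType) (I : Type) (r : seq I) (F : I -> T -> RR) :
  (forall i, continuous (F i)) -> continuous (fun x => \sum_(i <- r) F i x).
Proof.
move=> H; elim: r => [|i r IH].
  have -> : (fun x => \sum_(i <- [::]) F i x) = fun=> 0.
    by apply/funext => y; rewrite big_nil.
  exact: cst_continuous.
have -> : (fun x => \sum_(j <- i :: r) F j x) = fun x => F i x + \sum_(j <- r) F j x.
  by apply/funext => y; rewrite big_cons.
by apply: contD; [exact: H | exact: IH].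
Qed.

Lemma fst_cont (T U : topologicalType) : continuous (@fst T U).
Proof. by move=> [a b]; apply: cvg_fst. Qed.
Lemma snd_cont (T U : topologicalType) : continuous (@snd T U).
Proof. by move=> [a b]; apply: cvg_snd. Qed.
End Cont.
Lemma ncP (V : finType) (e : rel V) (S : {set V}) :
  non_cover_complex e S <-> exists u v, [/\ e u v, u \notin S & v \notin S].
Proof.
rewrite /non_cover_complex /is_cover; split.
- move/forallPn => [u] /forallPn [v]; rewrite negb_imply negbK => /andP[/andP[hu hv] euv].
  by exists u, v.
- move=> [u [v [euv hu hv]]]; apply/forallPn; exists u; apply/forallPn; exists v.
  by rewrite negb_imply negbK hu hv euv.
Qed.

Lemma sphP (y : bool -> RR) :
  sphere0 [set b | y b != 0]%SET <-> y true = 0 \/ y false = 0.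
Proof.
rewrite /sphere0; split.
- move/card_le1_eqP => h; case: (eqVneq (y true) 0) => [->|ht]; first by left.
  case: (eqVneq (y false) 0) => [->|hf]; first by right.
  by have := h true false; rewrite !inE ht hf => /(_ isT isT).
- move=> h; apply/card_le1_eqP => a b; rewrite !inE.
  by case: a; case: b => //; case: h => -> ; rewrite eqxx.
Qed.

Lemma maxmin (a d : RR) : Order.max (a - d) 0 + Order.min a d = a.
Proof.
case: (leP a d) => h.
- by rewrite max_r ?subr_le0 // add0r.
- by rewrite max_l ?subr_ge0 ?ltW // subrK.
Qed.

Section Main.
Variables (V1 V2 : finType) (e1 : rel V1) (e2 : rel V2).
Variables (a1 b1 : V1) (a2 b2 : V2).
Hypotheses (h1 : e1 a1 b1) (h2 : e2 a2 b2).

Definition Lx (x : RV (V1 + V2)%type) : RV V1 := fun v => x (inl v).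
Definition Rx (x : RV (V1 + V2)%type) : RV V2 := fun v => x (inr v).
Definition d1 x := dd e1 a1 b1 (Lx x).
Definition d2 x := dd e2 a2 b2 (Rx x).

Definition fm (x : RV (V1 + V2)%type) : RV ((V1 + V2) + bool)%type := fun w =>
  match w with
  | inl (inl v) => Order.max (x (inl v) - d1 x) 0
  | inl (inr v) => Order.max (x (inr v) - d2 x) 0
  | inr true => \sum_v Order.min (x (inl v)) (d1 x)
  | inr false => \sum_v Order.min (x (inr v)) (d2 x)
  end.

Definition gm (y : RV ((V1 + V2) + bool)%type) : RV (V1 + V2)%type := fun w =>
  match w with
  | inl v => y (inl (inl v)) + y (inr true) / #|V1|%:R
  | inr v => y (inl (inr v)) + y (inr false) / #|V2|%:R
  end.

Lemma n1_neq0 : #|V1|%:R != 0 :> RR.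
Proof. by rewrite pnatr_eq0 -lt0n; apply/card_gt0P; exists a1. Qed.
Lemma n2_neq0 : #|V2|%:R != 0 :> RR.
Proof. by rewrite pnatr_eq0 -lt0n; apply/card_gt0P; exists a2. Qed.

Definition SRC := realization (non_cover_complex (disjoint_union e1 e2)).
Definition TGT := realization (csusp (cjoin (non_cover_complex e1) (non_cover_complex e2))).

Lemma srcP x : SRC x <-> [/\ (forall w, 0 <= x w), \sum_w x w = 1 &
   (d1 x = 0 \/ d2 x = 0)].
Proof.
rewrite /SRC /realization /=; split.
- move=> [x0 [s1 /ncP [u [v [euv hu hv]]]]]; split => //.
  move: hu hv; rewrite !inE !negbK => /eqP hu /eqP hv.
  case: u v euv hu hv => [u|u] [v|v] //= euv hu hv.
  + by left; apply/(dd0P h1 (fun w => x0 (inl w))); exists u, v.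
  + by right; apply/(dd0P h2 (fun w => x0 (inr w))); exists u, v.
- move=> [x0 s1 hd]; split => //; split => //; apply/ncP.
  case: hd.
  + move=> /(dd0P h1 (fun w => x0 (inl w))) [u [v [euv hu hv]]].
    by exists (inl u), (inl v); rewrite !inE !negbK /Lx in hu hv *; rewrite hu hv eqxx.
  + move=> /(dd0P h2 (fun w => x0 (inr w))) [u [v [euv hu hv]]].
    by exists (inr u), (inr v); rewrite !inE !negbK /Rx in hu hv *; rewrite hu hv eqxx.
Qed.

Lemma tgtP y : TGT y <-> [/\ (forall w, 0 <= y w), \sum_w y w = 1,
   (exists u v, [/\ e1 u v, y (inl (inl u)) = 0 & y (inl (inl v)) = 0]),
   (exists u v, [/\ e2 u v, y (inl (inr u)) = 0 & y (inl (inr v)) = 0]) &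
   (y (inr true) = 0 \/ y (inr false) = 0)].
Proof.
rewrite /TGT /realization /csusp /cjoin /=; split.
- move=> [y0 [s1 /andP [/andP [/ncP [u [v [euv hu hv]]] /ncP [u' [v' [euv' hu' hv']]]] hs]]].
  split => //.
  + by exists u, v; move: hu hv; rewrite !inE !negbK => /eqP -> /eqP ->.
  + by exists u', v'; move: hu' hv'; rewrite !inE !negbK => /eqP -> /eqP ->.
  + have := (sphP (fun b => y (inr b))).1; apply.
    by move: hs; rewrite /sphere0; congr (_ <= _)%N; apply: eq_card => b; rewrite !inE.
- move=> [y0 s1 [u [v [euv hu hv]]] [u' [v' [euv' hu' hv']]] hs]; split => //; split => //.
  apply/andP; split; first (apply/andP; split); try apply/ncP.
  + by exists u, v; rewrite !inE hu hv eqxx.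
  + by exists u', v'; rewrite !inE hu' hv' eqxx.
  + have := (sphP (fun b => y (inr b))).2 hs.
    by rewrite /sphere0; congr (_ <= _)%N; apply: eq_card => b; rewrite !inE.
Qed.


Lemma sum_src (x : RV (V1 + V2)%type) :
  \sum_w x w = \sum_v x (inl v) + \sum_v x (inr v).
Proof. by rewrite big_sumType. Qed.

Lemma sum_tgt (y : RV ((V1 + V2) + bool)%type) : \sum_w y w =
  \sum_v y (inl (inl v)) + \sum_v y (inl (inr v)) + (y (inr true) + y (inr false)).
Proof. by rewrite big_sumType big_sumType big_bool. Qed.

Lemma f_tgt x : SRC x -> TGT (fm x).
Proof.
move/srcP => [x0 s1 hd].
have d10 : 0 <= d1 x := dd_ge0 h1 (fun v => x0 (inl v)).
have d20 : 0 <= d2 x := dd_ge0 h2 (fun v => x0 (inr v)).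
apply/tgtP; split.
- case => [[v|v]|[|]] /=; rewrite ?le_max ?lexx ?orbT //;
  by apply: sumr_ge0 => v _; rewrite le_min x0.
- rewrite sum_tgt /= addrACA -!big_split /= -s1 sum_src.
  by congr (_ + _); apply: eq_bigr => v _; exact: maxmin.
- have [u [v [euv hu hv]]] := dd_red h1 (Lx x).
  by exists u, v; split.
- have [u [v [euv hu hv]]] := dd_red h2 (Rx x).
  by exists u, v; split.
- case: hd => h; [left|right]; rewrite /= h; apply: big1 => v _; exact: min_r.
Qed.

Lemma sum_cdiv (V : finType) (c : RR) : #|V|%:R != 0 :> RR ->
  \sum_(i : V) c / #|V|%:R = c.
Proof. move=> n0; rewrite sumr_const; change (c / #|V|%:R *+ #|V| = c); by rewrite -mulr_natr divfK. Qed.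

Lemma g_src y : TGT y -> SRC (gm y).
Proof.
move/tgtP => [y0 s1 [u [v [euv hu hv]]] [u' [v' [euv' hu' hv']]] hs].
apply/srcP; split.
- case=> w /=; apply: addr_ge0 => //; apply: divr_ge0 => //; exact: ler0n.
- rewrite sum_src /= !big_split /= sum_cdiv ?n1_neq0 // sum_cdiv ?n2_neq0 //.
  by rewrite -s1 sum_tgt addrACA.
- case: hs => h; [left|right].
  + apply/(dd0P h1 (x := Lx (gm y))).
      by move=> w; rewrite /Lx /=; apply: addr_ge0 => //; apply: divr_ge0 => //; exact: ler0n.
    by exists u, v; rewrite /Lx /= h mul0r !addr0.
  + apply/(dd0P h2 (x := Rx (gm y))).
      by move=> w; rewrite /Rx /=; apply: addr_ge0 => //; apply: divr_ge0 => //; exact: ler0n.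
    by exists u', v'; rewrite /Rx /= h mul0r !addr0.
Qed.
Lemma fg y : TGT y -> fm (gm y) = y.
Proof.
move/tgtP => [y0 s1 [u [v [euv hu hv]]] [u' [v' [euv' hu' hv']]] hs].
set c1 := y (inr true) / #|V1|%:R.
set c2 := y (inr false) / #|V2|%:R.
have c10 : 0 <= c1 by apply: divr_ge0 => //; exact: ler0n.
have c20 : 0 <= c2 by apply: divr_ge0 => //; exact: ler0n.
have D1 : d1 (gm y) = c1.
  apply: (dd_shift h1 (x := fun v => y (inl (inl v)))) => //.
  by apply/(dd0P h1 (x := fun v => y (inl (inl v)))) => //; exists u, v.
have D2 : d2 (gm y) = c2.
  apply: (dd_shift h2 (x := fun v => y (inl (inr v)))) => //.
  by apply/(dd0P h2 (x := fun v => y (inl (inr v)))) => //; exists u', v'.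
apply/funext => -[[w|w]|[|]]; rewrite /fm ?D1 ?D2.
- by rewrite /gm addrK max_l.
- by rewrite /gm addrK max_l.
- rewrite (eq_bigr (fun _ => c1)); first exact: sum_cdiv n1_neq0.
  by move=> i _; rewrite /gm min_r // lerDr.
- rewrite (eq_bigr (fun _ => c2)); first exact: sum_cdiv n2_neq0.
  by move=> i _; rewrite /gm min_r // lerDr.
Qed.
Lemma gfL x : SRC x -> d1 x = 0 -> forall v, gm (fm x) (inl v) = x (inl v).
Proof.
move/srcP => [x0 _ _] h v /=; rewrite h subr0 max_l // big1 ?mul0r ?addr0 //.
by move=> w _; rewrite min_r.
Qed.

Lemma gfR x : SRC x -> d2 x = 0 -> forall v, gm (fm x) (inr v) = x (inr v).
Proof.
move/srcP => [x0 _ _] h v /=; rewrite h subr0 max_l // big1 ?mul0r ?addr0 //.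
by move=> w _; rewrite min_r.
Qed.

Definition H1 (p : (RR * RV (V1 + V2)%type)%type) : RV (V1 + V2)%type :=
  fun w => (1 - p.1) * gm (fm p.2) w + p.1 * p.2 w.

Lemma H1_src t x : 0 <= t <= 1 -> SRC x -> SRC (H1 (t, x)).
Proof.
move=> /andP [t0 t1] Sx.
have /srcP [g0 gs _] := g_src (f_tgt Sx).
have /srcP [x0 s1 hd] := Sx.
apply/srcP; split.
- move=> w; rewrite /H1 /=; apply: addr_ge0; apply: mulr_ge0 => //.
  by rewrite subr_ge0.
- rewrite /H1 /= big_split /= -!mulr_sumr gs s1 !mulr1 subrK //.
- case: hd => h; [left|right].
  + rewrite /d1; have -> : Lx (H1 (t, x)) = Lx x.
      apply/funext => v; change ((1 - t) * gm (fm x) (inl v) + t * x (inl v) = x (inl v)).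
      by rewrite gfL // -mulrDl subrK mul1r.
    exact: h.
  + rewrite /d2; have -> : Rx (H1 (t, x)) = Rx x.
      apply/funext => v; change ((1 - t) * gm (fm x) (inr v) + t * x (inr v) = x (inr v)).
      by rewrite gfR // -mulrDl subrK mul1r.
    exact: h.
Qed.

Lemma comp_cont (A B C : topologicalType) (f : A -> B) (g : B -> C) :
  continuous f -> continuous g -> continuous (fun x => g (f x)).
Proof. by move=> cf cg x; apply: continuous_comp; [exact: cf | exact: cg]. Qed.

Lemma pr_cont (W : finType) (w : W) : continuous (fun x : RV W => x w).
Proof. exact: (@proj_continuous _ (fun _ => RR) w). Qed.

Lemma d1_cont : continuous d1.
Proof.
apply: (@comp_cont _ (RV V1) _ Lx (dd e1 a1 b1)); last exact: dd_cont.
by apply: ptws_cont => v; exact: pr_cont.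
Qed.

Lemma d2_cont : continuous d2.
Proof.
apply: (@comp_cont _ (RV V2) _ Rx (dd e2 a2 b2)); last exact: dd_cont.
by apply: ptws_cont => v; exact: pr_cont.
Qed.

Lemma fm_cont : continuous fm.
Proof.
apply: ptws_cont => -[[v|v]|[|]]; rewrite /fm.
- apply: contMax; last exact: contC.
  apply: contD; [exact: pr_cont | apply: contN; exact: d1_cont].
- apply: contMax; last exact: contC.
  apply: contD; [exact: pr_cont | apply: contN; exact: d2_cont].
- apply: sum_cont => v; apply: contMin; [exact: pr_cont | exact: d1_cont].
- apply: sum_cont => v; apply: contMin; [exact: pr_cont | exact: d2_cont].
Qed.

Lemma gm_cont : continuous gm.
Proof.
apply: ptws_cont => -[v|v]; rewrite /gm.
- apply: contD; first exact: pr_cont.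
  apply: contM; [exact: pr_cont | exact: contC].
- apply: contD; first exact: pr_cont.
  apply: contM; [exact: pr_cont | exact: contC].
Qed.

Lemma H1_cont : continuous H1.
Proof.
apply: ptws_cont => w; rewrite /H1.
apply: contD; apply: contM.
- apply: contD; [exact: contC | apply: contN; exact: fst_cont].
- apply: (@comp_cont _ _ _ snd (fun x => gm (fm x) w)); first exact: snd_cont.
  apply: (@comp_cont _ _ _ fm (fun y => gm y w)); first exact: fm_cont.
  apply: (@comp_cont _ _ _ gm (fun y => y w)); [exact: gm_cont | exact: pr_cont].
- exact: fst_cont.
- apply: (@comp_cont _ (RV (V1 + V2)%type) _ snd (fun x : RV (V1 + V2)%type => x w)); [exact: snd_cont | exact: pr_cont].
Qed.

Lemma main_he : homotopy_equivalent SRC TGT.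
Proof.
exists fm, gm; split; [|split; [|split]].
- split; first exact: continuous_subspaceT fm_cont.
  by move=> _ [x Sx <-]; exact: f_tgt.
- split; first exact: continuous_subspaceT gm_cont.
  by move=> _ [y Ty <-]; exact: g_src.
- exists H1; split.
  + split; first exact: continuous_subspaceT H1_cont.
    move=> _ [[t x] [tI Sx] <-]; apply: H1_src; last exact: Sx.
    by move: tI; rewrite /= in_itv /=.

  + move=> x Sx; split; apply/funext => w; rewrite /H1 /=.
    * by rewrite subr0 mul1r mul0r addr0.
    * by rewrite subrr mul0r add0r mul1r.
- exists snd; split.
  + split; first exact: continuous_subspaceT (@snd_cont _ _).
    by move=> _ [[t y] [/= tI Ty] <-].
  + by move=> y Ty; split => //=; rewrite fg.
Qed.
End Main.
End Helpers.
Import Helpers.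

Unset Implicit Arguments.
Local Close Scope ring_scope.
Local Close Scope classical_set_scope.

Theorem lemma4p1 (V1 V2 : finType) (e1 : rel V1) (e2 : rel V2) :
  simple_graph e1 -> simple_graph e2 ->
  graph_connected e1 -> graph_connected e2 ->
  has_edge e1 -> has_edge e2 ->
  homotopy_equivalent
    (realization (non_cover_complex (disjoint_union e1 e2)))
    (realization (csusp (cjoin (non_cover_complex e1) (non_cover_complex e2)))).
Proof.
move=> _ _ _ _ [a1 [b1 h1]] [a2 [b2 h2]].
exact: (main_he h1 h2).
Qed.
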